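(* Let $p,q$ be relatively prime positive integers, $k\ge1$ an integer and $\mu\in\mathbb{C}$. Let $\mathcal{F}_1$ be the real one-dimensional singular foliation on a disc $\{y\in\mathbb{C}:|y|<r\}$ defined by the real $1$-form $$\omega_1=\mathrm{Re}\left\{\left(\frac{\mu q}{y}+\frac{q}{y^{qk+1}}\right)\mathrm{d}y\right\}$$ (equivalently, by the real flow of the vector field $X=i\,\frac{y^{qk+1}}{1+\mu y^{qk}}\frac{\partial}{\partial y}$). Then, if $r>0$ is small enough, there exists a $C^\infty$ submersion $f:\{0<|y|<r\}\to\mathbb{R}$ such that (1) $f$ is a first integral of $\mathcal{F}_1$, and (2) $f(y)=g(y^{qk})$ for some $C^\infty$ submersion $g$.
   Context: $\mathcal{F}_1$ is the restriction to the section $\{(1,y)\}$ of the real analytic foliation defined by $\mathrm{Re}(\tau)$, where $\tau=(\mu-1)p\frac{\mathrm{d}x}{x}+\mu q\frac{\mathrm{d}y}{y}-\mathrm{d}\left(\frac{1}{k(x^py^q)^k}\right)$. A first integral of a foliation is a function constant along its leaves. *)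

(* Defs.v *)
From Stdlib Require Import Reals Arith.
From Coquelicot Require Import Coquelicot.
Open Scope R_scope.

Definition punct_disc (r : R) (y : C) : Prop := 0 < Cmod y < r.

Definition d1 (F : C -> R) : C -> R := fun y => Derive (fun t => F (t, snd y)) (fst y).
Definition d2 (F : C -> R) : C -> R := fun y => Derive (fun t => F (fst y, t)) (snd y).

Fixpoint Ck (n : nat) (U : C -> Prop) (F : C -> R) : Prop :=
  match n with
  | O => forall y, U y -> continuous F y
  | S m => (forall y, U y -> continuous F y) /\
           (forall y, U y -> ex_derive (fun t => F (t, snd y)) (fst y)
                          /\ ex_derive (fun t => F (fst y, t)) (snd y)) /\
           Ck m U (d1 F) /\ Ck m U (d2 F)
  end.

Definition smooth_on (U : C -> Prop) (F : C -> R) : Prop := forall n, Ck n U F.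

Definition submersion_on (U : C -> Prop) (F : C -> R) : Prop :=
  smooth_on U F /\ forall y, U y -> (d1 F y, d2 F y) <> (0, 0).

Definition omega1 (q k : nat) (mu : C) (y v : C) : R :=
  Re ((mu * INR q / y + INR q / Cpow y (q * k + 1)) * v)%C.

Definition first_integral (U : C -> Prop) (omega : C -> C -> R) (F : C -> R) : Prop :=
  forall (a b : R) (g1 g2 : R -> R), a <= b ->
    (forall t, a <= t <= b ->
       U (g1 t, g2 t) /\ ex_derive g1 t /\ ex_derive g2 t /\
       omega (g1 t, g2 t) (Derive g1 t, Derive g2 t) = 0) ->
    F (g1 a, g2 a) = F (g1 b, g2 b).

(* Main.v *)
Require Import Defs.
From Stdlib Require Import Reals Arith Lra Lia FunctionalExtensionality.
From Coquelicot Require Import Coquelicot.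
Open Scope R_scope.
Local Notation d1 := Defs.d1.
Local Notation d2 := Defs.d2.

Lemma Ck_le : forall n U F, Ck (S n) U F -> Ck n U F.
Proof.
  induction n as [|n IH]; intros U F H.
  - destruct H as [H _]. exact H.
  - destruct H as [Hc [Hd [H1 H2]]]. split; [exact Hc|]. split; [exact Hd|].
    split; apply IH; assumption.
Qed.

Lemma Ck_cont : forall n U F y, Ck n U F -> U y -> continuous F y.
Proof. intros [|n] U F y H Hy; [exact (H y Hy)| exact (proj1 H y Hy)]. Qed.

Lemma Ck_mono : forall n (U V : C -> Prop) F, (forall y, V y -> U y) -> Ck n U F -> Ck n V F.
Proof.
  induction n as [|n IH]; intros U V F HVU H.
  - intros y Hy. apply H, HVU, Hy.
  - destruct H as [Hc [Hd [H1 H2]]]. split; [intros y Hy; apply Hc, HVU, Hy|].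
    split; [intros y Hy; apply Hd, HVU, Hy|]. split; eapply IH; eauto.
Qed.

Lemma Ck_pt : forall n (U : C -> Prop) F, (forall y, U y -> Ck n (fun z => z = y) F) -> Ck n U F.
Proof.
  induction n as [|n IH]; intros U F H.
  - intros y Hy. exact (H y Hy y eq_refl).
  - split; [intros y Hy; exact (proj1 (H y Hy) y eq_refl)|].
    split; [intros y Hy; exact (proj1 (proj2 (H y Hy)) y eq_refl)|].
    split; apply IH; intros y Hy; apply (H y Hy).
Qed.

Lemma Ck_local : forall n (U : C -> Prop) F,
  (forall y, U y -> exists V : C -> Prop, V y /\ Ck n V F) -> Ck n U F.
Proof.
  intros n U F H. apply Ck_pt. intros y Hy. destruct (H y Hy) as [V [HV HC]].
  eapply Ck_mono; [|exact HC]. intros z ->; exact HV.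
Qed.

Lemma Ck_ext_glob : forall n U F G, (forall y, F y = G y) -> Ck n U G -> Ck n U F.
Proof.
  intros n U F G H HG. replace F with G; [exact HG|]. apply functional_extensionality. intros; symmetry; auto.
Qed.

Lemma loc_1 : forall (V : C -> Prop) (y : C), locally y V -> locally (fst y) (fun t => V (t, snd y)).
Proof.
  intros V [y1 y2] H. simpl.
  apply (locally_2d_1d_const_y (fun u v => V (u, v))).
  apply locally_2d_locally. simpl. revert H. apply filter_imp. intros [u v]; auto.
Qed.

Lemma loc_2 : forall (V : C -> Prop) (y : C), locally y V -> locally (snd y) (fun t => V (fst y, t)).
Proof.
  intros V [y1 y2] H. simpl.
  apply (locally_2d_1d_const_x (fun u v => V (u, v))).
  apply locally_2d_locally. simpl. revert H. apply filter_imp. intros [u v]; auto.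
Qed.

Lemma Ck_ext : forall n (U : C -> Prop) F G, open U -> (forall y, U y -> F y = G y) -> Ck n U G -> Ck n U F.
Proof.
  induction n as [|n IH]; intros U F G HU Heq H.
  - intros y Hy. apply (continuous_ext_loc _ G). 
    generalize (HU y Hy). apply filter_imp. intros z Hz. symmetry; auto.
    apply H, Hy.
  - destruct H as [Hc [Hd [H1 H2]]]. split.
    { intros y Hy. apply (continuous_ext_loc _ G).
      generalize (HU y Hy). apply filter_imp. intros z Hz. symmetry; auto. apply Hc, Hy. }
    split.
    { intros y Hy. destruct (Hd y Hy) as [D1 D2]. split.
      - apply (ex_derive_ext_loc (fun t => G (t, snd y))); [|exact D1].
        generalize (loc_1 _ _ (HU y Hy)). apply filter_imp. intros t Ht. symmetry; auto.
      - apply (ex_derive_ext_loc (fun t => G (fst y, t))); [|exact D2].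
        generalize (loc_2 _ _ (HU y Hy)). apply filter_imp. intros t Ht. symmetry; auto. }
    split.
    + apply (IH U _ (d1 G) HU); [|exact H1]. intros y Hy. unfold d1. apply Derive_ext_loc.
      generalize (loc_1 _ _ (HU y Hy)). apply filter_imp. intros t Ht. auto.
    + apply (IH U _ (d2 G) HU); [|exact H2]. intros y Hy. unfold d2. apply Derive_ext_loc.
      generalize (loc_2 _ _ (HU y Hy)). apply filter_imp. intros t Ht. auto.
Qed.

Lemma Ck_const : forall n U c, open U -> Ck n U (fun _ => c).
Proof.
  induction n as [|n IH]; intros U c HU.
  - intros y _. apply continuous_const.
  - split; [intros; apply continuous_const|]. split.
    + intros; split; apply ex_derive_const.
    + split; apply (Ck_ext _ _ _ (fun _ => 0)); auto; intros y _; unfold d1, d2; apply Derive_const.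
Qed.

Lemma Ck_fst : forall n U, open U -> Ck n U fst.
Proof.
  intros [|n] U HU.
  - intros [y1 y2] _. apply continuous_fst.
  - split; [intros [y1 y2] _; apply continuous_fst|]. split.
    + intros y _; split; simpl; [apply ex_derive_id|apply ex_derive_const].
    + split.
      * apply (Ck_ext _ _ _ (fun _ => 1)); auto using Ck_const. intros y _; unfold d1; simpl. apply Derive_id.
      * apply (Ck_ext _ _ _ (fun _ => 0)); auto using Ck_const. intros y _; unfold d2; simpl. apply Derive_const.
Qed.

Lemma Ck_snd : forall n U, open U -> Ck n U snd.
Proof.
  intros [|n] U HU.
  - intros [y1 y2] _. apply continuous_snd.
  - split; [intros [y1 y2] _; apply continuous_snd|]. split.
    + intros y _; split; simpl; [apply ex_derive_const|apply ex_derive_id].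
    + split.
      * apply (Ck_ext _ _ _ (fun _ => 0)); auto using Ck_const. intros y _; unfold d1; simpl. apply Derive_const.
      * apply (Ck_ext _ _ _ (fun _ => 1)); auto using Ck_const. intros y _; unfold d2; simpl. apply Derive_id.
Qed.

Lemma exd_cont : forall (phi : R -> R) x, ex_derive phi x -> continuous phi x.
Proof. intros phi x H. apply (ex_derive_continuous (K:=R_AbsRing) (V:=R_NormedModule)). exact H. Qed.

Lemma cont_plus : forall (F G : C -> R) y, continuous F y -> continuous G y -> continuous (fun z => F z + G z) y.
Proof. intros. apply (continuous_plus F G); auto. Qed.
Lemma cont_mult : forall (F G : C -> R) y, continuous F y -> continuous G y -> continuous (fun z => F z * G z) y.
Proof. intros. apply (continuous_mult F G); auto. Qed.

Lemma Ck_plus : forall n U F G, open U -> Ck n U F -> Ck n U G -> Ck n U (fun y => F y + G y).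
Proof.
  induction n as [|n IH]; intros U F G HU HF HG.
  - intros y Hy. apply cont_plus; auto.
  - destruct HF as [Fc [Fd [F1 F2]]]. destruct HG as [Gc [Gd [G1 G2]]].
    split; [intros y Hy; apply cont_plus; auto|]. split.
    + intros y Hy. destruct (Fd y Hy), (Gd y Hy). split; [apply (ex_derive_plus (fun t => F (t, snd y)) (fun t => G (t, snd y)))|apply (ex_derive_plus (fun t => F (fst y, t)) (fun t => G (fst y, t)))]; auto.
    + split.
      * apply (Ck_ext _ _ _ (fun y => d1 F y + d1 G y)); auto.
        intros y Hy; destruct (Fd y Hy), (Gd y Hy); unfold d1. apply Derive_plus; auto.
      * apply (Ck_ext _ _ _ (fun y => d2 F y + d2 G y)); auto.
        intros y Hy; destruct (Fd y Hy), (Gd y Hy); unfold d2. apply Derive_plus; auto.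
Qed.

Lemma Ck_mult : forall n U F G, open U -> Ck n U F -> Ck n U G -> Ck n U (fun y => F y * G y).
Proof.
  induction n as [|n IH]; intros U F G HU HF HG.
  - intros y Hy. apply cont_mult; auto.
  - pose proof (Ck_le _ _ _ HF) as HF'. pose proof (Ck_le _ _ _ HG) as HG'.
    destruct HF as [Fc [Fd [F1 F2]]]. destruct HG as [Gc [Gd [G1 G2]]].
    split; [intros y Hy; apply cont_mult; auto|]. split.
    + intros y Hy. destruct (Fd y Hy), (Gd y Hy). split; [apply (ex_derive_mult (fun t => F (t, snd y)) (fun t => G (t, snd y)))|apply (ex_derive_mult (fun t => F (fst y, t)) (fun t => G (fst y, t)))]; auto.
    + split.
      * apply (Ck_ext _ _ _ (fun y => d1 F y * G y + F y * d1 G y)); auto.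
        intros [y1 y2] Hy; destruct (Fd _ Hy), (Gd _ Hy); unfold d1; simpl in *. apply Derive_mult; auto.
        apply Ck_plus; auto.
      * apply (Ck_ext _ _ _ (fun y => d2 F y * G y + F y * d2 G y)); auto.
        intros [y1 y2] Hy; destruct (Fd _ Hy), (Gd _ Hy); unfold d2; simpl in *. apply Derive_mult; auto.
        apply Ck_plus; auto.
Qed.

Lemma Ck_scal : forall n U c F, open U -> Ck n U F -> Ck n U (fun y => c * F y).
Proof. intros. apply Ck_mult; auto. apply Ck_const; auto. Qed.

Lemma Ck_opp : forall n U F, open U -> Ck n U F -> Ck n U (fun y => - F y).
Proof. intros. apply (Ck_ext_glob _ _ _ (fun y => -1 * F y)). intros; ring. apply Ck_scal; auto. Qed.

Lemma Ck_minus : forall n U F G, open U -> Ck n U F -> Ck n U G -> Ck n U (fun y => F y - G y).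
Proof. intros. apply Ck_plus; auto. apply Ck_opp; auto. Qed.

Lemma Ck_comp1_step : forall n U F (phi phi' : R -> R), open U -> Ck (S n) U F ->
  (forall y, U y -> is_derive phi (F y) (phi' (F y))) -> Ck n U (fun y => phi' (F y)) ->
  Ck (S n) U (fun y => phi (F y)).
Proof.
  intros n U F phi phi' HU HF Hd Hp.
  pose proof (Ck_le _ _ _ HF) as HF'.
  destruct HF as [Fc [Fd [F1 F2]]].
  split.
  { intros y Hy. apply (continuous_comp F phi). auto. apply exd_cont. eexists; apply Hd, Hy. }
  split.
  { intros [y1 y2] Hy. destruct (Fd _ Hy). simpl in *. split; apply (ex_derive_comp (K:=R_AbsRing) (V:=R_NormedModule)); auto; eexists; apply Hd, Hy. }
  split.
  - apply (Ck_ext _ _ _ (fun y => d1 F y * phi' (F y))); auto.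
    + intros [y1 y2] Hy; destruct (Fd _ Hy); unfold d1; simpl in *. rewrite Derive_comp; auto.
      rewrite (is_derive_unique _ _ _ (Hd _ Hy)). reflexivity.
      eexists. apply Hd, Hy.
    + apply Ck_mult; auto.
  - apply (Ck_ext _ _ _ (fun y => d2 F y * phi' (F y))); auto.
    + intros [y1 y2] Hy; destruct (Fd _ Hy); unfold d2; simpl in *. rewrite Derive_comp; auto.
      rewrite (is_derive_unique _ _ _ (Hd _ Hy)). reflexivity.
      eexists. apply Hd, Hy.
    + apply Ck_mult; auto.
Qed.

Lemma Ck_comp1_zero : forall U F (phi : R -> R), Ck 0 U F ->
  (forall y, U y -> ex_derive phi (F y)) -> Ck 0 U (fun y => phi (F y)).
Proof.
  intros U F phi HF Hd y Hy. apply (continuous_comp F phi). auto. apply exd_cont. auto.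
Qed.

Lemma Ck_inv : forall n U F, open U -> Ck n U F -> (forall y, U y -> F y <> 0) -> Ck n U (fun y => / F y).
Proof.
  induction n as [|n IH]; intros U F HU HF Hnz.
  - apply Ck_comp1_zero; auto. intros y Hy. auto_derive. auto.
  - apply (Ck_comp1_step _ _ _ _ (fun x => - (/ x * / x))); auto.
    + intros y Hy. auto_derive. auto. field. auto.
    + apply Ck_opp; auto. apply Ck_mult; auto; apply IH; auto using Ck_le.
Qed.

Lemma Ck_ln : forall n U F, open U -> Ck n U F -> (forall y, U y -> 0 < F y) -> Ck n U (fun y => ln (F y)).
Proof.
  intros [|n] U F HU HF Hp.
  - apply Ck_comp1_zero; auto. intros y Hy. auto_derive. auto.
  - apply (Ck_comp1_step _ _ _ _ (fun x => / x)); auto.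
    + intros y Hy. auto_derive. auto. field. apply Rgt_not_eq, Hp, Hy.
    + apply Ck_inv; auto using Ck_le. intros y Hy. apply Rgt_not_eq, Hp, Hy.
Qed.

Lemma Ck_atan : forall n U F, open U -> Ck n U F -> Ck n U (fun y => atan (F y)).
Proof.
  intros [|n] U F HU HF.
  - apply Ck_comp1_zero; auto. intros y Hy. auto_derive. auto.
  - apply (Ck_comp1_step _ _ _ _ (fun x => / (1 + x * x))); auto.
    + intros y Hy. auto_derive. auto. field. nra.
    + apply Ck_inv; auto using Ck_le. apply Ck_plus; auto using Ck_const. apply Ck_mult; auto using Ck_le.
      intros y _. nra.
Qed.

Definition Em (m : nat) (x : R) : R := if Rlt_dec 0 x then (/ x) ^ m * exp (- / x) else 0.

Lemma exp_pow_n : forall n x, exp x ^ n = exp (INR n * x).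
Proof.
  induction n as [|n IH]; intros x.
  - simpl. rewrite Rmult_0_l, exp_0. reflexivity.
  - simpl pow. rewrite IH, <- exp_plus, S_INR. f_equal. ring.
Qed.

Lemma exp_ge_id : forall z, 0 <= z -> z <= exp z.
Proof.
  intros z Hz. destruct (Req_dec z 0) as [->|Hn].
  - rewrite exp_0; lra.
  - pose proof (exp_ineq1 z ltac:(lra)). lra.
Qed.

Lemma exp_poly_bound : forall m y, 0 < y -> y ^ (S m) * exp (- y) <= INR (S (S m)) ^ (S (S m)) / y.
Proof.
  intros m y Hy. set (c := INR (S (S m))).
  assert (Hc : 0 < c) by (unfold c; apply lt_0_INR; lia).
  assert (He : (y / c) ^ (S (S m)) <= exp y).
  { replace (exp y) with (exp (y / c) ^ (S (S m))).
    apply pow_incr. split. apply Rlt_le, Rdiv_lt_0_compat; auto. apply exp_ge_id. apply Rlt_le, Rdiv_lt_0_compat; auto.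
    rewrite exp_pow_n. f_equal. fold c. field. lra. }
  rewrite exp_Ropp.
  assert (Hey : 0 < exp y) by apply exp_pos.
  assert (Hyc : 0 < (y / c) ^ S (S m)) by (apply pow_lt, Rdiv_lt_0_compat; auto).
  apply (Rmult_le_reg_r (exp y * y)). nra.
  replace (y ^ S m * / exp y * (exp y * y)) with (y ^ (S (S m))) by (simpl; field; lra).
  replace (c ^ S (S m) / y * (exp y * y)) with (c ^ S (S m) * exp y) by (field; lra).
  replace (y ^ (S (S m))) with (c ^ S (S m) * (y / c) ^ S (S m)).
  2:{ unfold Rdiv. rewrite Rpow_mult_distr, pow_inv. field. apply pow_nonzero; lra. }
  apply Rmult_le_compat_l. apply pow_le; lra. exact He.
Qed.

Lemma locally_pos : forall x, 0 < x -> locally x (fun t : R => 0 < t).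
Proof. intros x Hx. apply (open_gt 0). exact Hx. Qed.
Lemma locally_neg : forall x, x < 0 -> locally x (fun t : R => t < 0).
Proof. intros x Hx. apply (open_lt 0). exact Hx. Qed.

Lemma Em_pos_eq : forall m x, 0 < x -> Em m x = (/ x) ^ m * exp (- / x).
Proof. intros m x Hx. unfold Em. destruct (Rlt_dec 0 x); [reflexivity|lra]. Qed.
Lemma Em_neg_eq : forall m x, ~ 0 < x -> Em m x = 0.
Proof. intros m x Hx. unfold Em. destruct (Rlt_dec 0 x); [lra|reflexivity]. Qed.

Lemma Em_deriv : forall m x, is_derive (Em m) x (Em (S (S m)) x - INR m * Em (S m) x).
Proof.
  intros m x. destruct (Rlt_dec 0 x) as [Hx|Hx].
  - rewrite !Em_pos_eq by exact Hx.
    apply (is_derive_ext_loc (fun t => (/ t) ^ m * exp (- / t))).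
    { generalize (locally_pos x Hx). apply filter_imp. intros t Ht. rewrite Em_pos_eq; auto. }
    auto_derive. lra.
    destruct m as [|m]. simpl. field. lra.
    rewrite S_INR. simpl pow. field. lra.
  - destruct (Rlt_dec x 0) as [Hx'|Hx'].
    + rewrite !Em_neg_eq by exact Hx.
      apply (is_derive_ext_loc (fun _ => 0)).
      { generalize (locally_neg x Hx'). apply filter_imp. intros t Ht. rewrite Em_neg_eq; auto. lra. }
      replace (0 - INR m * 0) with 0 by ring. apply is_derive_Reals, derivable_pt_lim_const.
    + assert (x = 0) by lra. subst x. rewrite !Em_neg_eq by lra. replace (0 - INR m * 0) with 0 by ring.
      apply is_derive_Reals. intros eps Heps.
      set (c := INR (S (S m)) ^ (S (S m))).
      assert (Hc : 0 < c) by (apply pow_lt, lt_0_INR; lia).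
      exists (mkposreal (eps / c) (Rdiv_lt_0_compat _ _ Heps Hc)). simpl.
      intros h Hh Hhd. rewrite Rplus_0_l, (Em_neg_eq m 0) by lra.
      destruct (Rlt_dec 0 h) as [Hp|Hp].
      * rewrite Em_pos_eq by exact Hp.
        pose proof (exp_poly_bound m (/ h) (Rinv_0_lt_compat _ Hp)) as B.
        fold c in B. unfold Rdiv in B. rewrite Rinv_inv in B.
        assert (E : ((/ h) ^ m * exp (- / h) - 0) / h - 0 = (/ h) ^ S m * exp (- / h)) by (simpl; field; lra).
        rewrite E. rewrite Rabs_pos_eq. 2:{ apply Rmult_le_pos. apply pow_le. apply Rlt_le, Rinv_0_lt_compat; lra. apply Rlt_le, exp_pos. }
        apply (Rle_lt_trans _ _ _ B). rewrite Rabs_pos_eq in Hhd by lra.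
        apply (Rmult_lt_compat_l c) in Hhd; auto. replace (c * (eps / c)) with eps in Hhd by (field; lra).
        unfold Rdiv. rewrite Rmult_comm in Hhd. lra.
      * rewrite Em_neg_eq by exact Hp. replace ((0 - 0) / h - 0) with 0 by (field; auto). rewrite Rabs_R0. exact Heps.
Qed.

Lemma Em_exd : forall m x, ex_derive (Em m) x.
Proof. intros m x. eexists. apply Em_deriv. Qed.

Lemma Em_nonneg : forall m x, 0 <= Em m x.
Proof.
  intros m x. unfold Em. destruct (Rlt_dec 0 x). apply Rmult_le_pos. apply pow_le. apply Rlt_le, Rinv_0_lt_compat; lra. apply Rlt_le, exp_pos. lra.
Qed.

Lemma Em_pos : forall m x, 0 < x -> 0 < Em m x.
Proof.
  intros m x Hx. rewrite Em_pos_eq by exact Hx. apply Rmult_lt_0_compat. apply pow_lt, Rinv_0_lt_compat; lra. apply exp_pos.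
Qed.

Lemma Ck_Em : forall n m U F, open U -> Ck n U F -> Ck n U (fun y => Em m (F y)).
Proof.
  induction n as [|n IH]; intros m U F HU HF.
  - apply Ck_comp1_zero; auto. intros; apply Em_exd.
  - apply (Ck_comp1_step _ _ _ _ (fun x => Em (S (S m)) x - INR m * Em (S m) x)); auto.
    + intros; apply Em_deriv.
    + apply Ck_minus; auto. apply IH; auto using Ck_le. apply Ck_scal; auto. apply IH; auto using Ck_le.
Qed.

Lemma is_derive_compR : forall (f g : R -> R) x df dg, is_derive f (g x) df -> is_derive g x dg ->
  is_derive (fun t => f (g t)) x (dg * df).
Proof. intros. apply (is_derive_comp f g x df dg); auto. Qed.

Lemma exp_le_mono : forall x y, x <= y -> exp x <= exp y.
Proof. intros x y H. destruct (Req_dec x y) as [->|]; [lra|]. apply Rlt_le, exp_increasing; lra. Qed.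

Definition chi1 (x : R) : R := Em 0 (1 - x) / (Em 0 (1 - x) + Em 0 (1 + x)).
Definition Cb : R := 8 * exp 2.
Definition Mb (b : R) : R := 4 * PI * Rabs b * Cb + 1.
Definition Gf (b : R) (x : R) : R := x - 2 * PI * b * chi1 (x / Mb b).

Lemma Cb_pos : 0 < Cb.
Proof. unfold Cb. pose proof (exp_pos 2). lra. Qed.
Lemma Mb_pos : forall b, 1 <= Mb b.
Proof. intros b. unfold Mb. pose proof Cb_pos. pose proof PI_RGT_0. pose proof (Rabs_pos b).
  assert (0 <= 4 * PI * Rabs b) by (apply Rmult_le_pos; lra).
  assert (0 <= 4 * PI * Rabs b * Cb) by (apply Rmult_le_pos; lra). lra. Qed.

Lemma E0_le1 : forall z, Em 0 z <= 1.
Proof. intros z. unfold Em. destruct (Rlt_dec 0 z). simpl. rewrite Rmult_1_l. rewrite <- exp_0. apply exp_le_mono.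
  pose proof (Rinv_0_lt_compat z r). lra. lra. Qed.
Lemma E2_le4 : forall z, Em 2 z <= 4.
Proof. intros z. unfold Em. destruct (Rlt_dec 0 z) as [Hz|]; [|lra].
  set (y := / z). assert (Hy : 0 < y) by (apply Rinv_0_lt_compat; auto).
  assert (H1 : y / 2 <= exp (y / 2)) by (apply exp_ge_id; lra).
  assert (H2 : exp y = exp (y/2) ^ 2) by (rewrite exp_pow_n; f_equal; simpl; field).
  assert (H3 : (y/2)^2 <= exp (y/2) ^ 2) by (apply pow_incr; lra).
  rewrite exp_Ropp. pose proof (exp_pos y).
  apply (Rmult_le_reg_r (exp y)); auto. rewrite Rmult_assoc, Rinv_l by lra. nra. Qed.
Lemma E0_ge : forall z, 1 <= z -> exp (-1) <= Em 0 z.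
Proof. intros z Hz. rewrite Em_pos_eq by lra. simpl. rewrite Rmult_1_l. apply exp_le_mono.
  assert (/ z <= 1). { rewrite <- Rinv_1. apply Rinv_le_contravar; lra. } lra. Qed.

Lemma chi_den_ge : forall x, exp (-1) <= Em 0 (1 - x) + Em 0 (1 + x).
Proof. intros x. pose proof (Em_nonneg 0 (1 - x)). pose proof (Em_nonneg 0 (1+x)).
  destruct (Rle_dec x 0). pose proof (E0_ge (1 - x) ltac:(lra)). lra. pose proof (E0_ge (1 + x) ltac:(lra)). lra. Qed.

Lemma exp_m1_pos : 0 < exp (-1). Proof. apply exp_pos. Qed.

Lemma chi1_deriv : forall x, exists d, is_derive chi1 x d /\ Rabs d <= Cb.
Proof.
  intros x.
  set (f := Em 0 (1 - x)). set (g := Em 0 (1 - x) + Em 0 (1 + x)).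
  set (A := - (Em 2 (1 - x) - INR 0 * Em 1 (1 - x))). set (B := Em 2 (1 + x) - INR 0 * Em 1 (1 + x)).
  assert (DA : is_derive (fun t => Em 0 (1 - t)) x A).
  { unfold A. replace (- (Em 2 (1 - x) - INR 0 * Em 1 (1 - x))) with (-1 * (Em 2 (1 - x) - INR 0 * Em 1 (1 - x))) by ring.
    apply (is_derive_compR (Em 0) (fun t => 1 - t)). apply Em_deriv. auto_derive; auto; ring. }
  assert (DB : is_derive (fun t => Em 0 (1 + t)) x B).
  { unfold B. replace (Em 2 (1 + x) - INR 0 * Em 1 (1 + x)) with (1 * (Em 2 (1 + x) - INR 0 * Em 1 (1 + x))) by ring.
    apply (is_derive_compR (Em 0) (fun t => 1 + t)). apply Em_deriv. auto_derive; auto; ring. }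
  pose proof (chi_den_ge x) as Hg. fold g in Hg. pose proof exp_m1_pos.
  exists ((A * g - f * (A + B)) / g ^ 2). split.
  - unfold chi1. apply (is_derive_div (fun t => Em 0 (1 - t)) (fun t => Em 0 (1 - t) + Em 0 (1 + t))); auto.
    apply (is_derive_plus (fun t => Em 0 (1 - t)) (fun t => Em 0 (1 + t))); auto. fold g; lra.
  - assert (Ef : 0 <= f <= 1) by (split; [apply Em_nonneg|apply E0_le1]).
    assert (Eg2 : 0 <= Em 0 (1 + x) <= 1) by (split; [apply Em_nonneg|apply E0_le1]).
    assert (EA : 0 <= - A <= 4) by (unfold A; simpl; pose proof (Em_nonneg 2 (1-x)); pose proof (E2_le4 (1-x)); lra).
    assert (EB : 0 <= B <= 4) by (unfold B; simpl; pose proof (Em_nonneg 2 (1+x)); pose proof (E2_le4 (1+x)); lra).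
    replace (A * g - f * (A + B)) with (A * Em 0 (1 + x) - f * B) by (unfold g, f; ring).
    assert (Hg2 : exp (-1) ^ 2 <= g ^ 2) by (apply pow_incr; lra).
    assert (Hexp : exp (-1) ^ 2 * exp 2 = 1).
    { rewrite exp_pow_n, <- exp_plus. replace (INR 2 * -1 + 2) with 0 by (simpl; ring). apply exp_0. }
    assert (Hgp : 0 < g ^ 2) by (apply pow_lt; lra).
    unfold Rdiv. rewrite Rabs_mult, (Rabs_pos_eq (/ g ^ 2)) by (apply Rlt_le, Rinv_0_lt_compat; auto).
    assert (Hn : Rabs (A * Em 0 (1 + x) - f * B) <= 8).
    { apply Rabs_le. split; nra. }
    unfold Cb. apply (Rmult_le_reg_r (g ^ 2)); auto. rewrite Rmult_assoc, Rinv_l by lra.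
    pose proof (exp_pos 2). nra.
Qed.

Lemma Gf_deriv : forall b x, exists d, is_derive (Gf b) x d /\ 1/2 <= d.
Proof.
  intros b x. destruct (chi1_deriv (x / Mb b)) as [d [Hd Hb]].
  pose proof (Mb_pos b) as HM.
  exists (1 - 2 * PI * b * (/ Mb b * d)). split.
  - unfold Gf. apply (is_derive_minus (fun t => t) (fun t => 2 * PI * b * chi1 (t / Mb b))).
    apply is_derive_Reals, derivable_pt_lim_id.
    apply (is_derive_scal (fun t => chi1 (t / Mb b))).
    replace (/ Mb b * d) with (/ Mb b * d) by ring.
    apply (is_derive_compR chi1 (fun t => t / Mb b)). exact Hd.
    auto_derive; auto. field. lra.
  - pose proof PI_RGT_0. pose proof Cb_pos.
    assert (Rabs (2 * PI * b * (/ Mb b * d)) <= 1/2).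
    { rewrite !Rabs_mult. rewrite (Rabs_pos_eq 2), (Rabs_pos_eq PI), (Rabs_pos_eq (/ Mb b)) by (try apply Rlt_le, Rinv_0_lt_compat; lra).
      assert (Rabs b * Rabs d <= Rabs b * Cb) by (apply Rmult_le_compat_l; auto using Rabs_pos).
      apply (Rmult_le_reg_r (Mb b)); [lra|].
      replace (2 * PI * Rabs b * (/ Mb b * Rabs d) * Mb b) with (2 * PI * (Rabs b * Rabs d)) by (field; lra).
      assert (HMe : Mb b = 4 * PI * Rabs b * Cb + 1) by reflexivity. rewrite HMe. pose proof (Rabs_pos b). nra. }
    apply Rabs_le_between in H1. lra.
Qed.

Lemma Gf_exd : forall b x, ex_derive (Gf b) x.
Proof. intros b x. destruct (Gf_deriv b x) as [d [H _]]. eexists; eauto. Qed.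
Lemma Gf_Derive : forall b x, 1/2 <= Derive (Gf b) x.
Proof. intros b x. destruct (Gf_deriv b x) as [d [H H']]. rewrite (is_derive_unique _ _ _ H). auto. Qed.

Lemma Gf_big : forall b x, Mb b <= x -> Gf b x = x.
Proof.
  intros b x Hx. pose proof (Mb_pos b). unfold Gf, chi1.
  assert (1 - x / Mb b <= 0). { assert (1 <= x / Mb b). { apply (Rmult_le_reg_r (Mb b)); [lra|]. field_simplify; lra. } lra. }
  rewrite (Em_neg_eq 0 (1 - x / Mb b)) by lra. unfold Rdiv. rewrite !Rmult_0_l. ring.
Qed.

Lemma Gf_small : forall b x, x <= - Mb b -> Gf b x = x - 2 * PI * b.
Proof.
  intros b x Hx. pose proof (Mb_pos b). unfold Gf, chi1.
  assert (1 + x / Mb b <= 0). { assert (x / Mb b <= -1). { apply (Rmult_le_reg_r (Mb b)); [lra|]. field_simplify; lra. } lra. }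
  rewrite (Em_neg_eq 0 (1 + x / Mb b)) by lra. rewrite Rplus_0_r.
  assert (0 < Em 0 (1 - x / Mb b)) by (apply Em_pos; lra). field. lra.
Qed.

Lemma Ck_Gf : forall n b U X, open U -> Ck n U X -> Ck n U (fun y => Gf b (X y)).
Proof.
  intros n b U X HU HX. pose proof (Mb_pos b).
  unfold Gf, chi1. apply Ck_minus; auto. apply Ck_scal; auto. unfold Rdiv at 2. apply Ck_mult; auto.
  - apply Ck_Em; auto. apply Ck_minus; auto using Ck_const. unfold Rdiv. apply (Ck_ext_glob _ _ _ (fun y => / Mb b * X y)). intros; ring. apply Ck_scal; auto.
  - apply Ck_inv; auto. apply Ck_plus; auto; apply Ck_Em; auto.
    + apply Ck_minus; auto using Ck_const. unfold Rdiv. apply (Ck_ext_glob _ _ _ (fun y => / Mb b * X y)). intros; ring. apply Ck_scal; auto.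
    + apply Ck_plus; auto using Ck_const. unfold Rdiv. apply (Ck_ext_glob _ _ _ (fun y => / Mb b * X y)). intros; ring. apply Ck_scal; auto.
    + intros y _. pose proof (chi_den_ge (X y / Mb b)). pose proof exp_m1_pos. lra.
Qed.

Lemma ln_le_xm1 : forall x, 0 < x -> ln x <= x - 1.
Proof. intros x Hx. pose proof (exp_ineq1_le (ln x)). rewrite exp_ln in H by auto. lra. Qed.

Lemma LogB : forall a u, 0 < u -> Rabs a * ln (/ u) <= / (4 * u) + Rabs a * (4 * Rabs a + 1).
Proof.
  intros a u Hu. set (K := 4 * Rabs a + 1). pose proof (Rabs_pos a).
  assert (HK : 0 < K) by (unfold K; lra).
  assert (E : ln (/ u) = ln (/ (K * u)) + ln K).
  { rewrite <- ln_mult. f_equal. field. split; lra. apply Rinv_0_lt_compat. nra. auto. }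
  pose proof (ln_le_xm1 (/ (K * u)) ltac:(apply Rinv_0_lt_compat; nra)).
  pose proof (ln_le_xm1 K HK).
  assert (ln (/ u) <= / (K * u) + K) by lra.
  assert (Rabs a * ln (/ u) <= Rabs a * (/ (K * u) + K)) by (apply Rmult_le_compat_l; auto).
  assert (Rabs a * / (K * u) <= / (4 * u)).
  { apply (Rmult_le_reg_r (4 * K * u)). nra.
    replace (Rabs a * / (K * u) * (4 * K * u)) with (4 * Rabs a) by (field; split; lra).
    replace (/ (4 * u) * (4 * K * u)) with K by (field; lra). unfold K; lra. }
  nra.
Qed.

Lemma LnS : forall u v, u <> 0 -> v ^ 2 < u ^ 2 -> u ^ 2 + v ^ 2 < 1 -> Rabs (ln (u ^ 2 + v ^ 2)) <= 2 * ln (/ Rabs u).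
Proof.
  intros u v Hu Hv Hs.
  assert (Hu2 : 0 < u ^ 2) by (apply pow2_gt_0; auto).
  assert (ln (u ^ 2 + v ^ 2) < 0). { rewrite <- ln_1. apply ln_increasing; nra. }
  assert (ln (u ^ 2) <= ln (u ^ 2 + v ^ 2)).
  { destruct (Req_dec v 0) as [->|Hv0]. right; f_equal; ring. left. apply ln_increasing; auto. pose proof (pow2_gt_0 v Hv0). lra. }
  assert (ln (u ^ 2) = - 2 * ln (/ Rabs u)).
  { rewrite ln_Rinv by (apply Rabs_pos_lt; auto). rewrite <- (pow2_abs u). rewrite ln_pow by (apply Rabs_pos_lt; auto). simpl; ring. }
  rewrite Rabs_left by auto. lra.
Qed.

Section Geo.
Variable a b : R.

Definition Phi0 (w : C) : R := fst w / (fst w ^ 2 + snd w ^ 2) - a / 2 * ln (fst w ^ 2 + snd w ^ 2).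
Definition chP (w : C) : R := Phi0 w + b * atan (snd w / fst w).
Definition chN (w : C) : R := Phi0 w + b * (atan (snd w / fst w) - PI).
Definition chL (w : C) : R := Phi0 w + b * (- (PI / 2) - atan (fst w / snd w)).
Definition argU (w : C) : R := Phi0 w + b * (PI / 2 - atan (fst w / snd w)).
Definition chU (w : C) : R := Gf b (argU w).
Definition gg (w : C) : R :=
  if Rlt_dec (snd w) 0 then chL w else if Rlt_dec 0 (snd w) then chU w
  else if Rlt_dec 0 (fst w) then chP w else chN w.

Definition Tb : R := Mb b + Rabs a * (4 * Rabs a + 1) + 2 * PI * Rabs b + 1.
Variable rho : R.
Hypothesis rho_pos : 0 < rho.
Hypothesis rho_half : rho <= 1/2.
Hypothesis rho_T : rho <= / (4 * Tb).

Lemma Tb_pos : 0 < Tb.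
Proof. unfold Tb. pose proof (Mb_pos b). pose proof (Rabs_pos a). pose proof (Rabs_pos b). pose proof PI_RGT_0. nra. Qed.

Lemma Phi0_bound : forall u v, u <> 0 -> v ^ 2 < u ^ 2 -> u ^ 2 + v ^ 2 < rho ^ 2 ->
  Rabs (a / 2 * ln (u ^ 2 + v ^ 2)) <= / (4 * Rabs u) + Rabs a * (4 * Rabs a + 1).
Proof.
  intros u v Hu Hv Hs.
  assert (rho ^ 2 <= 1/4) by nra.
  pose proof (LnS u v Hu Hv ltac:(lra)).
  pose proof (LogB a (Rabs u) (Rabs_pos_lt u Hu)).
  rewrite Rabs_mult. unfold Rdiv. rewrite Rabs_mult, (Rabs_pos_eq (/2)) by lra.
  pose proof (Rabs_pos a). nra.
Qed.



Lemma u_lt_rho : forall u v, u ^ 2 + v ^ 2 < rho ^ 2 -> Rabs u < rho.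
Proof.
  intros u v H. destruct (Rlt_dec (Rabs u) rho); auto. exfalso.
  assert (rho ^ 2 <= Rabs u ^ 2) by (apply pow_incr; lra). rewrite <- pow2_abs in H. nra.
Qed.

Lemma quarter : forall u, 0 < Rabs u < rho -> Tb <= / (4 * Rabs u).
Proof.
  intros u [H1 H2]. pose proof Tb_pos.
  apply (Rle_trans _ (/ (4 * rho))).
  - assert (A : rho * (4 * Tb) <= 1).
    { replace 1 with (/ (4 * Tb) * (4 * Tb)) by (field; lra). apply Rmult_le_compat_r; lra. }
    apply (Rmult_le_reg_r (4 * rho)); [lra|]. rewrite Rinv_l by lra. lra.
  - apply Rinv_le_contravar; lra.
Qed.

Lemma ineqP : forall u v, 0 < u -> Rabs v < u -> u ^ 2 + v ^ 2 < rho ^ 2 -> Mb b <= chP (u, v).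
Proof.
  intros u v Hu Hv Hs.
  assert (Hv2 : v ^ 2 < u ^ 2). { rewrite <- (pow2_abs v). pose proof (Rabs_pos v). nra. }
  pose proof (Phi0_bound u v ltac:(lra) Hv2 Hs) as B.
  pose proof (u_lt_rho u v Hs) as Hr.
  rewrite (Rabs_pos_eq u) in B, Hr by lra.
  pose proof (quarter u ltac:(rewrite Rabs_pos_eq; lra)) as Q. rewrite Rabs_pos_eq in Q by lra.
  assert (Huv : / (2 * u) <= u / (u ^ 2 + v ^ 2)).
  { apply (Rmult_le_reg_r (2 * u * (u ^ 2 + v ^ 2))). nra.
    replace (/ (2 * u) * (2 * u * (u ^ 2 + v ^ 2))) with (u ^ 2 + v ^ 2) by (field; lra).
    replace (u / (u ^ 2 + v ^ 2) * (2 * u * (u ^ 2 + v ^ 2))) with (2 * u ^ 2) by (field; nra). lra. }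
  assert (Hat : Rabs (b * atan (v / u)) <= Rabs b * (PI / 2)).
  { rewrite Rabs_mult. apply Rmult_le_compat_l. apply Rabs_pos. pose proof (atan_bound (v / u)). apply Rabs_le; lra. }
  unfold chP, Phi0; simpl fst; simpl snd.
  apply Rabs_le_between in B. apply Rabs_le_between in Hat.
  assert (/ (2 * u) = 2 * / (4 * u)) by (field; lra).
  unfold Tb in Q. pose proof (Rabs_pos b). pose proof PI_RGT_0.
  assert (0 <= PI * Rabs b) by (apply Rmult_le_pos; lra). lra.
Qed.

Lemma ineqN : forall u v, u < 0 -> Rabs v < - u -> u ^ 2 + v ^ 2 < rho ^ 2 -> chN (u, v) + 2 * PI * b <= - Mb b.
Proof.
  intros u v Hu Hv Hs.
  assert (Hv2 : v ^ 2 < u ^ 2). { rewrite <- (pow2_abs v). pose proof (Rabs_pos v). nra. }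
  pose proof (Phi0_bound u v ltac:(lra) Hv2 Hs) as B.
  pose proof (u_lt_rho u v Hs) as Hr.
  rewrite (Rabs_left u) in B, Hr by lra.
  pose proof (quarter u ltac:(rewrite Rabs_left; lra)) as Q. rewrite Rabs_left in Q by lra.
  assert (Huv : u / (u ^ 2 + v ^ 2) <= - / (2 * - u)).
  { apply (Rmult_le_reg_r (2 * - u * (u ^ 2 + v ^ 2))). nra.
    replace (- / (2 * - u) * (2 * - u * (u ^ 2 + v ^ 2))) with (- (u ^ 2 + v ^ 2)) by (field; lra).
    replace (u / (u ^ 2 + v ^ 2) * (2 * - u * (u ^ 2 + v ^ 2))) with (- 2 * u ^ 2) by (field; nra). lra. }
  assert (Hat : Rabs (b * (atan (v / u) - PI) + 2 * PI * b) <= Rabs b * (3 * PI / 2)).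
  { replace (b * (atan (v / u) - PI) + 2 * PI * b) with (b * (atan (v / u) + PI)) by ring.
    rewrite Rabs_mult. apply Rmult_le_compat_l. apply Rabs_pos. pose proof (atan_bound (v / u)). pose proof PI_RGT_0. apply Rabs_le; lra. }
  unfold chN, Phi0; simpl fst; simpl snd.
  apply Rabs_le_between in B. apply Rabs_le_between in Hat.
  assert (/ (2 * - u) = 2 * / (4 * - u)) by (field; lra).
  unfold Tb in Q. pose proof (Rabs_pos b). pose proof PI_RGT_0.
  assert (0 <= PI * Rabs b) by (apply Rmult_le_pos; lra). lra.
Qed.

End Geo.

Lemma atan_inv_pos : forall x, 0 < x -> atan (/ x) = PI / 2 - atan x.
Proof. apply atan_inv. Qed.
Lemma atan_inv_neg : forall x, x < 0 -> atan (/ x) = - (PI / 2) - atan x.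
Proof.
  intros x Hx. replace (/ x) with (- / (- x)) by (field; lra). rewrite atan_opp, atan_inv_pos by lra.
  rewrite atan_opp. ring.
Qed.

Section Geo2.
Variable a b rho : R.
Hypothesis rho_pos : 0 < rho.
Hypothesis rho_half : rho <= 1/2.
Hypothesis rho_T : rho <= / (4 * Tb a b).

Lemma agreeP : forall u v, 0 < u -> Rabs v < u -> u ^ 2 + v ^ 2 < rho ^ 2 -> gg a b (u, v) = chP a b (u, v).
Proof.
  intros u v Hu Hv Hs. unfold gg; simpl fst; simpl snd.
  destruct (Rlt_dec v 0) as [Hv0|Hv0].
  - unfold chL, chP; simpl fst; simpl snd. f_equal. f_equal.
    replace (u / v) with (/ (v / u)) by (field; lra). rewrite atan_inv_neg. lra.
    apply Rdiv_neg_pos; lra.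
  - destruct (Rlt_dec 0 v) as [Hv1|Hv1].
    + unfold chU. replace (argU a b (u, v)) with (chP a b (u, v)).
      apply Gf_big. apply (ineqP a b rho); auto.
      unfold argU, chP; simpl fst; simpl snd. f_equal. f_equal.
      replace (u / v) with (/ (v / u)) by (field; lra). rewrite atan_inv_pos. lra.
      apply Rdiv_lt_0_compat; lra.
    + destruct (Rlt_dec 0 u); [reflexivity|lra].
Qed.

Lemma agreeN : forall u v, u < 0 -> Rabs v < - u -> u ^ 2 + v ^ 2 < rho ^ 2 -> gg a b (u, v) = chN a b (u, v).
Proof.
  intros u v Hu Hv Hs. unfold gg; simpl fst; simpl snd.
  destruct (Rlt_dec v 0) as [Hv0|Hv0].
  - unfold chL, chN; simpl fst; simpl snd. f_equal. f_equal.
    replace (u / v) with (/ (v / u)) by (field; lra). rewrite atan_inv_pos. lra.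
    apply Rdiv_neg_neg; lra.
  - destruct (Rlt_dec 0 v) as [Hv1|Hv1].
    + unfold chU. replace (argU a b (u, v)) with (chN a b (u, v) + 2 * PI * b).
      rewrite Gf_small. ring. apply (ineqN a b rho); auto.
      unfold argU, chN; simpl fst; simpl snd.
      replace (u / v) with (/ (v / u)) by (field; lra). rewrite atan_inv_neg. lra.
      apply Rdiv_pos_neg; lra.
    + destruct (Rlt_dec 0 u); [lra|reflexivity].
Qed.

End Geo2.

Definition RK (a b : R) (w : C) : R :=
  let u := fst w in let v := snd w in let s := u ^ 2 + v ^ 2 in
  (v ^ 2 - u ^ 2) / s ^ 2 - (a * u + b * v) / s.
Definition IK (a b : R) (w : C) : R :=
  let u := fst w in let v := snd w in let s := u ^ 2 + v ^ 2 in
  2 * u * v / s ^ 2 - (b * u - a * v) / s.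
Definition Dw (a b : R) (w : C) (al be : R) : R := RK a b w * al - IK a b w * be.

Section Der.
Variable a b : R.
Variables (p1 p2 : R -> R) (t al be : R).
Hypothesis H1 : is_derive p1 t al.
Hypothesis H2 : is_derive p2 t be.
Let E1 : Derive (fun x => p1 x) t = al. Proof. apply is_derive_unique; exact H1. Qed.
Let E2 : Derive (fun x => p2 x) t = be. Proof. apply is_derive_unique; exact H2. Qed.

Lemma d_chP : p1 t <> 0 -> is_derive (fun s => chP a b (p1 s, p2 s)) t (Dw a b (p1 t, p2 t) al be).
Proof.
  intros Hn. unfold chP, Phi0; simpl fst; simpl snd.
  assert (Hs : 0 < p1 t ^ 2 + p2 t ^ 2) by (pose proof (pow2_gt_0 _ Hn); pose proof (pow2_ge_0 (p2 t)); lra).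
  auto_derive.
  - repeat split; try (eexists; eauto); lra.
  - rewrite E1, E2.
    unfold Dw, RK, IK; simpl fst; simpl snd. field. split; lra.
Qed.

Lemma d_chN : p1 t <> 0 -> is_derive (fun s => chN a b (p1 s, p2 s)) t (Dw a b (p1 t, p2 t) al be).
Proof.
  intros Hn. unfold chN, Phi0; simpl fst; simpl snd.
  assert (Hs : 0 < p1 t ^ 2 + p2 t ^ 2) by (pose proof (pow2_gt_0 _ Hn); pose proof (pow2_ge_0 (p2 t)); lra).
  auto_derive.
  - repeat split; try (eexists; eauto); lra.
  - rewrite E1, E2. unfold Dw, RK, IK; simpl fst; simpl snd. field. split; lra.
Qed.

Lemma d_chL : p2 t <> 0 -> is_derive (fun s => chL a b (p1 s, p2 s)) t (Dw a b (p1 t, p2 t) al be).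
Proof.
  intros Hn. unfold chL, Phi0; simpl fst; simpl snd.
  assert (Hs : 0 < p1 t ^ 2 + p2 t ^ 2) by (pose proof (pow2_gt_0 _ Hn); pose proof (pow2_ge_0 (p1 t)); lra).
  auto_derive.
  - repeat split; try (eexists; eauto); lra.
  - rewrite E1, E2. unfold Dw, RK, IK; simpl fst; simpl snd. field. split; lra.
Qed.

Lemma d_argU : p2 t <> 0 -> is_derive (fun s => argU a b (p1 s, p2 s)) t (Dw a b (p1 t, p2 t) al be).
Proof.
  intros Hn. unfold argU, Phi0; simpl fst; simpl snd.
  assert (Hs : 0 < p1 t ^ 2 + p2 t ^ 2) by (pose proof (pow2_gt_0 _ Hn); pose proof (pow2_ge_0 (p1 t)); lra).
  auto_derive.
  - repeat split; try (eexists; eauto); lra.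
  - rewrite E1, E2. unfold Dw, RK, IK; simpl fst; simpl snd. field. split; lra.
Qed.

Lemma d_chU : p2 t <> 0 -> is_derive (fun s => chU a b (p1 s, p2 s)) t
   (Derive (Gf b) (argU a b (p1 t, p2 t)) * Dw a b (p1 t, p2 t) al be).
Proof.
  intros Hn. unfold chU. rewrite Rmult_comm.
  apply (is_derive_compR (Gf b) (fun s => argU a b (p1 s, p2 s))).
  - destruct (Gf_exd b (argU a b (p1 t, p2 t))) as [l Hl]. rewrite (is_derive_unique _ _ _ Hl). exact Hl.
  - apply d_argU; auto.
Qed.

End Der.

Ltac rwD := repeat match goal with
 | H : is_derive ?p ?t ?l |- context [Derive ?f ?t] => replace (Derive f t) with l by (symmetry; apply is_derive_unique; exact H) end.

Lemma loc_pos : forall (h : R -> R) t l, is_derive h t l -> 0 < h t -> locally t (fun s => 0 < h s).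
Proof.
  intros h t l Hd Hp. assert (Hc : continuous h t) by (apply exd_cont; eexists; eauto).
  apply Hc. apply locally_pos. exact Hp.
Qed.

Definition lam (a b : R) (w : C) : R := if Rlt_dec 0 (snd w) then Derive (Gf b) (argU a b w) else 1.

Lemma lam_pos : forall a b w, 1/2 <= lam a b w.
Proof. intros. unfold lam. destruct (Rlt_dec 0 (snd w)). apply Gf_Derive. lra. Qed.

Section Along.
Variable a b rho : R.
Hypothesis rho_pos : 0 < rho.
Hypothesis rho_half : rho <= 1/2.
Hypothesis rho_T : rho <= / (4 * Tb a b).

Lemma along : forall p1 p2 t al be, is_derive p1 t al -> is_derive p2 t be ->
  0 < p1 t ^ 2 + p2 t ^ 2 < rho ^ 2 ->
  is_derive (fun s => gg a b (p1 s, p2 s)) t (lam a b (p1 t, p2 t) * Dw a b (p1 t, p2 t) al be).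
Proof.
  intros p1 p2 t al be H1 H2 [Hs0 Hs].
  assert (Hsq : is_derive (fun s => rho ^ 2 - (p1 s ^ 2 + p2 s ^ 2)) t (0 - (2 * p1 t * al + 2 * p2 t * be))).
  { auto_derive; [repeat split; try (eexists; eassumption) | rwD; ring]. }
  pose proof (loc_pos _ _ _ Hsq ltac:(lra)) as Ls.
  destruct (Rlt_dec (p2 t) 0) as [Hn|Hn].
  - unfold lam; simpl snd. destruct (Rlt_dec 0 (p2 t)); [lra|]. rewrite Rmult_1_l.
    apply (is_derive_ext_loc (fun s => chL a b (p1 s, p2 s))).
    + assert (Hd : is_derive (fun s => - p2 s) t (- be)) by (auto_derive; [repeat split; try (eexists; eassumption) | rwD; ring]).
      generalize (loc_pos _ _ _ Hd ltac:(lra)). apply filter_imp. intros s Hs'. unfold gg; simpl snd.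
      destruct (Rlt_dec (p2 s) 0); [reflexivity|lra].
    + apply d_chL; auto; lra.
  - destruct (Rlt_dec 0 (p2 t)) as [Hp|Hp].
    + unfold lam; simpl snd. destruct (Rlt_dec 0 (p2 t)); [|lra].
      apply (is_derive_ext_loc (fun s => chU a b (p1 s, p2 s))).
      * generalize (loc_pos _ _ _ H2 Hp). apply filter_imp. intros s Hs'. unfold gg; simpl snd.
        destruct (Rlt_dec (p2 s) 0); [lra|]. destruct (Rlt_dec 0 (p2 s)); [reflexivity|lra].
      * apply d_chU; auto; lra.
    + assert (Hz : p2 t = 0) by lra.
      unfold lam; simpl snd. destruct (Rlt_dec 0 (p2 t)); [lra|]. rewrite Rmult_1_l.
      assert (Hp1 : p1 t <> 0) by (intro E; rewrite E, Hz in Hs0; lra).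
      assert (Dm : is_derive (fun s => p1 s - p2 s) t (al - be)) by (auto_derive; [repeat split; try (eexists; eassumption) | rwD; ring]).
      assert (Dp : is_derive (fun s => p1 s + p2 s) t (al + be)) by (auto_derive; [repeat split; try (eexists; eassumption) | rwD; ring]).
      assert (Dn : is_derive (fun s => - p1 s - p2 s) t (- al - be)) by (auto_derive; [repeat split; try (eexists; eassumption) | rwD; ring]).
      assert (Dq : is_derive (fun s => - p1 s + p2 s) t (- al + be)) by (auto_derive; [repeat split; try (eexists; eassumption) | rwD; ring]).
      destruct (Rlt_dec 0 (p1 t)) as [Hq|Hq].
      * apply (is_derive_ext_loc (fun s => chP a b (p1 s, p2 s))).
        -- generalize (filter_and (F:=locally t) _ _ (filter_and (F:=locally t) _ _ (loc_pos _ _ _ Dm ltac:(lra)) (loc_pos _ _ _ Dp ltac:(lra))) Ls).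
           apply filter_imp. intros s [[A B] C]. symmetry. apply (agreeP a b rho); auto; try lra. apply Rabs_def1; lra.
        -- apply d_chP; auto.
      * apply (is_derive_ext_loc (fun s => chN a b (p1 s, p2 s))).
        -- generalize (filter_and (F:=locally t) _ _ (filter_and (F:=locally t) _ _ (loc_pos _ _ _ Dn ltac:(lra)) (loc_pos _ _ _ Dq ltac:(lra))) Ls).
           apply filter_imp. intros s [[A B] C]. symmetry. apply (agreeN a b rho); auto; try lra. apply Rabs_def1; lra.
        -- apply d_chN; auto.
Qed.

End Along.

Lemma Ck_pow2 : forall n U F, open U -> Ck n U F -> Ck n U (fun y => F y ^ 2).
Proof. intros. apply (Ck_ext_glob _ _ _ (fun y => F y * F y)). intros; ring. apply Ck_mult; auto. Qed.

Section CkCharts.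
Variable a b : R.
Variable n : nat.
Variable U : C -> Prop.
Hypothesis HU : open U.
Variables F1 F2 : C -> R.
Hypothesis HF1 : Ck n U F1.
Hypothesis HF2 : Ck n U F2.

Lemma Ck_S : Ck n U (fun y => F1 y ^ 2 + F2 y ^ 2).
Proof. apply Ck_plus; auto; apply Ck_pow2; auto. Qed.

Lemma Ck_Phi0 : (forall y, U y -> 0 < F1 y ^ 2 + F2 y ^ 2) -> Ck n U (fun y => Phi0 a (F1 y, F2 y)).
Proof.
  intros Hp. unfold Phi0; simpl fst; simpl snd.
  apply Ck_minus; auto.
  - unfold Rdiv. apply Ck_mult; auto. apply Ck_inv; auto using Ck_S. intros y Hy; specialize (Hp y Hy); lra.
  - apply Ck_scal; auto. apply Ck_ln; auto using Ck_S.
Qed.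

Lemma pos_of_ne1 : forall y, F1 y <> 0 -> 0 < F1 y ^ 2 + F2 y ^ 2.
Proof. intros y H. pose proof (pow2_gt_0 _ H). pose proof (pow2_ge_0 (F2 y)). lra. Qed.
Lemma pos_of_ne2 : forall y, F2 y <> 0 -> 0 < F1 y ^ 2 + F2 y ^ 2.
Proof. intros y H. pose proof (pow2_gt_0 _ H). pose proof (pow2_ge_0 (F1 y)). lra. Qed.

Lemma Ck_chP : (forall y, U y -> F1 y <> 0) -> Ck n U (fun y => chP a b (F1 y, F2 y)).
Proof.
  intros Hn. unfold chP. apply Ck_plus; auto. apply Ck_Phi0; auto using pos_of_ne1.
  simpl fst; simpl snd. apply Ck_scal; auto. apply Ck_atan; auto. unfold Rdiv. apply Ck_mult; auto. apply Ck_inv; auto.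
Qed.

Lemma Ck_chN : (forall y, U y -> F1 y <> 0) -> Ck n U (fun y => chN a b (F1 y, F2 y)).
Proof.
  intros Hn. unfold chN. apply Ck_plus; auto. apply Ck_Phi0; auto using pos_of_ne1.
  simpl fst; simpl snd. apply Ck_scal; auto. apply Ck_minus; auto using Ck_const. apply Ck_atan; auto. unfold Rdiv. apply Ck_mult; auto. apply Ck_inv; auto.
Qed.

Lemma Ck_chL : (forall y, U y -> F2 y <> 0) -> Ck n U (fun y => chL a b (F1 y, F2 y)).
Proof.
  intros Hn. unfold chL. apply Ck_plus; auto. apply Ck_Phi0; auto using pos_of_ne2.
  simpl fst; simpl snd. apply Ck_scal; auto. apply Ck_minus; auto using Ck_const. apply Ck_atan; auto. unfold Rdiv. apply Ck_mult; auto. apply Ck_inv; auto.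
Qed.

Lemma Ck_chU : (forall y, U y -> F2 y <> 0) -> Ck n U (fun y => chU a b (F1 y, F2 y)).
Proof.
  intros Hn. unfold chU. apply Ck_Gf; auto. unfold argU. apply Ck_plus; auto. apply Ck_Phi0; auto using pos_of_ne2.
  simpl fst; simpl snd. apply Ck_scal; auto. apply Ck_minus; auto using Ck_const. apply Ck_atan; auto. unfold Rdiv. apply Ck_mult; auto. apply Ck_inv; auto.
Qed.

End CkCharts.

Lemma open_sub : forall (U : C -> Prop) (h : C -> R), open U -> (forall z, U z -> continuous h z) ->
  open (fun z => U z /\ 0 < h z).
Proof.
  intros U h HU Hc z [Hz Hh]. apply filter_and. apply HU, Hz. apply (Hc z Hz). apply locally_pos. exact Hh.
Qed.

Section CkGG.
Variable a b rho : R.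
Hypothesis rho_pos : 0 < rho.
Hypothesis rho_half : rho <= 1/2.
Hypothesis rho_T : rho <= / (4 * Tb a b).

Lemma Ck_gg : forall n U F1 F2, open U -> Ck n U F1 -> Ck n U F2 ->
  (forall y, U y -> 0 < F1 y ^ 2 + F2 y ^ 2 < rho ^ 2) -> Ck n U (fun y => gg a b (F1 y, F2 y)).
Proof.
  intros n U F1 F2 HU H1 H2 Hs. apply Ck_local. intros y Hy.
  destruct (Rlt_dec (F2 y) 0) as [Hn|Hn].
  - set (V := fun z => U z /\ 0 < - F2 z).
    assert (HV : open V) by (apply open_sub; auto; intros z Hz; apply (Ck_cont n U); auto; apply Ck_opp; auto).
    exists V. split. split; auto; lra.
    apply (Ck_ext _ _ _ (fun z => chL a b (F1 z, F2 z))); auto.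
    + intros z [Hz Hz']. unfold gg; simpl snd. destruct (Rlt_dec (F2 z) 0); [reflexivity|lra].
    + apply Ck_chL; auto; try (eapply Ck_mono; [|eassumption]; intros z [Hz _]; exact Hz). intros z [_ Hz]; lra.
  - destruct (Rlt_dec 0 (F2 y)) as [Hp|Hp].
    + set (V := fun z => U z /\ 0 < F2 z).
      assert (HV : open V) by (apply open_sub; auto; intros z Hz; apply (Ck_cont n U); auto).
      exists V. split. split; auto.
      apply (Ck_ext _ _ _ (fun z => chU a b (F1 z, F2 z))); auto.
      * intros z [Hz Hz']. unfold gg; simpl snd. destruct (Rlt_dec (F2 z) 0); [lra|]. destruct (Rlt_dec 0 (F2 z)); [reflexivity|lra].
      * apply Ck_chU; auto; try (eapply Ck_mono; [|eassumption]; intros z [Hz _]; exact Hz). intros z [_ Hz]; lra.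
    + assert (Hz0 : F2 y = 0) by lra.
      assert (Hp1 : F1 y <> 0) by (intro E; specialize (Hs y Hy); rewrite E, Hz0 in Hs; lra).
      destruct (Rlt_dec 0 (F1 y)) as [Hq|Hq].
      * set (V := fun z => (U z /\ 0 < F1 z - F2 z) /\ 0 < F1 z + F2 z).
        assert (HV : open V).
        { apply open_sub. apply open_sub; auto. intros z Hz; apply (Ck_cont n U); auto; apply Ck_minus; auto.
          intros z [Hz _]; apply (Ck_cont n U); auto; apply Ck_plus; auto. }
        exists V. split. split; [split|]; auto; lra.
        apply (Ck_ext _ _ _ (fun z => chP a b (F1 z, F2 z))); auto.
        -- intros z [[Hz A] B]. apply (agreeP a b rho); auto; try lra. apply Rabs_def1; lra. apply Hs, Hz.
        -- apply Ck_chP; auto; try (eapply Ck_mono; [|eassumption]; intros z [[Hz _] _]; exact Hz). intros z [[_ A] B]; lra.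
      * set (V := fun z => (U z /\ 0 < - F1 z - F2 z) /\ 0 < - F1 z + F2 z).
        assert (HV : open V).
        { apply open_sub. apply open_sub; auto. intros z Hz; apply (Ck_cont n U); auto; apply Ck_minus; auto; apply Ck_opp; auto.
          intros z [Hz _]; apply (Ck_cont n U); auto; apply Ck_plus; auto; apply Ck_opp; auto. }
        exists V. split. split; [split|]; auto; lra.
        apply (Ck_ext _ _ _ (fun z => chN a b (F1 z, F2 z))); auto.
        -- intros z [[Hz A] B]. apply (agreeN a b rho); auto; try lra. apply Rabs_def1; lra. apply Hs, Hz.
        -- apply Ck_chN; auto; try (eapply Ck_mono; [|eassumption]; intros z [[Hz _] _]; exact Hz). intros z [[_ A] B]; lra.
Qed.

End CkGG.

Lemma is_derive_multR : forall (f g : R -> R) x df dg, is_derive f x df -> is_derive g x dg ->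
  is_derive (fun t => f t * g t) x (df * g x + f x * dg).
Proof. intros. apply (is_derive_mult f g x df dg); auto. intros; apply Rmult_comm. Qed.
Lemma is_derive_plusR : forall (f g : R -> R) x df dg, is_derive f x df -> is_derive g x dg ->
  is_derive (fun t => f t + g t) x (df + dg).
Proof. intros. apply (is_derive_plus f g x df dg); auto. Qed.
Lemma is_derive_minusR : forall (f g : R -> R) x df dg, is_derive f x df -> is_derive g x dg ->
  is_derive (fun t => f t - g t) x (df - dg).
Proof. intros. apply (is_derive_minus f g x df dg); auto. Qed.

Lemma RtoC_plus' : forall x y : R, RtoC (x + y) = (RtoC x + RtoC y)%C.
Proof. intros. unfold RtoC, Cplus; simpl. f_equal; ring. Qed.

Lemma Ck_Cpow : forall N n U, open U -> Ck n U (fun y => fst (Cpow y N)) /\ Ck n U (fun y => snd (Cpow y N)).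
Proof.
  induction N as [|N IH]; intros n U HU.
  - simpl. split; apply Ck_const; auto.
  - destruct (IH n U HU) as [A B]. split.
    + apply (Ck_ext_glob _ _ _ (fun y => fst y * fst (Cpow y N) - snd y * snd (Cpow y N))).
      intros y; reflexivity. apply Ck_minus; auto; apply Ck_mult; auto using Ck_fst, Ck_snd.
    + apply (Ck_ext_glob _ _ _ (fun y => fst y * snd (Cpow y N) + snd y * fst (Cpow y N))).
      intros y; reflexivity. apply Ck_plus; auto; apply Ck_mult; auto using Ck_fst, Ck_snd.
Qed.

Definition Dpow (N : nat) (c d : C) : C := (RtoC (INR N) * Cpow c (pred N) * d)%C.

Lemma Dpow_S : forall N c d, (d * Cpow c N + c * Dpow N c d)%C = Dpow (S N) c d.
Proof.
  intros N c d. unfold Dpow. destruct N as [|N].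
  - simpl. unfold RtoC, Cmult, Cplus; simpl. f_equal; ring.
  - rewrite (S_INR (S N)), RtoC_plus'. simpl pred. simpl Cpow. ring.
Qed.

Lemma Cpow_deriv : forall N (c1 c2 : R -> R) t e1 e2, is_derive c1 t e1 -> is_derive c2 t e2 ->
  is_derive (fun s => fst (Cpow (c1 s, c2 s) N)) t (fst (Dpow N (c1 t, c2 t) (e1, e2))) /\
  is_derive (fun s => snd (Cpow (c1 s, c2 s) N)) t (snd (Dpow N (c1 t, c2 t) (e1, e2))).
Proof.
  induction N as [|N IH]; intros c1 c2 t e1 e2 H1 H2.
  - split; [replace (fst (Dpow 0 (c1 t, c2 t) (e1, e2))) with 0 by (unfold Dpow; simpl; ring)
           |replace (snd (Dpow 0 (c1 t, c2 t) (e1, e2))) with 0 by (unfold Dpow; simpl; ring)];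
    simpl; apply is_derive_Reals, derivable_pt_lim_const.
  - destruct (IH c1 c2 t e1 e2 H1 H2) as [A B].
    rewrite <- Dpow_S.
    set (P1 := fun s => fst (Cpow (c1 s, c2 s) N)) in *.
    set (P2 := fun s => snd (Cpow (c1 s, c2 s) N)) in *.
    set (D := Dpow N (c1 t, c2 t) (e1, e2)) in *.
    split.
    + assert (E : is_derive (fun s => c1 s * P1 s - c2 s * P2 s) t (e1 * P1 t + c1 t * fst D - (e2 * P2 t + c2 t * snd D))).
      { apply (is_derive_minusR (fun s => c1 s * P1 s) (fun s => c2 s * P2 s)); apply is_derive_multR; auto. }
      replace (fst ((e1, e2) * Cpow (c1 t, c2 t) N + (c1 t, c2 t) * D)%C) with (e1 * P1 t + c1 t * fst D - (e2 * P2 t + c2 t * snd D)).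
      exact E. unfold P1, P2; cbn [fst snd Cmult Cplus Cpow]. ring.
    + assert (E : is_derive (fun s => c1 s * P2 s + c2 s * P1 s) t (e1 * P2 t + c1 t * snd D + (e2 * P1 t + c2 t * fst D))).
      { apply (is_derive_plusR (fun s => c1 s * P2 s) (fun s => c2 s * P1 s)); apply is_derive_multR; auto. }
      replace (snd ((e1, e2) * Cpow (c1 t, c2 t) N + (c1 t, c2 t) * D)%C) with (e1 * P2 t + c1 t * snd D + (e2 * P1 t + c2 t * fst D)).
      exact E. unfold P1, P2; cbn [fst snd Cmult Cplus Cpow]. ring.
Qed.

Lemma pow_lt_S : forall x r n, 0 <= x -> x < r -> x ^ S n < r ^ S n.
Proof.
  intros x r n Hx Hr. simpl. pose proof (pow_incr x r n (conj Hx (Rlt_le _ _ Hr))).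
  pose proof (pow_lt r n ltac:(lra)). pose proof (pow_le x n Hx). nra.
Qed.

Lemma pow_le_self : forall r n, 0 <= r <= 1 -> r ^ S n <= r.
Proof.
  intros r n Hr. simpl. pose proof (pow_incr r 1 n ltac:(lra)). rewrite pow1 in H. nra.
Qed.

Lemma punct_iff : forall rr y, 0 < rr -> (punct_disc rr y <-> 0 < fst y ^ 2 + snd y ^ 2 < rr ^ 2).
Proof.
  intros rr y HR. unfold punct_disc, Cmod. set (s := fst y ^ 2 + snd y ^ 2).
  assert (Hs : 0 <= s) by (unfold s; pose proof (pow2_ge_0 (fst y)); pose proof (pow2_ge_0 (snd y)); lra).
  split.
  - intros [A B]. split.
    + destruct (Req_dec s 0) as [E|E]; [rewrite E, sqrt_0 in A; lra| lra].
    + pose proof (sqrt_sqrt s Hs). pose proof (sqrt_pos s). simpl. nra.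
  - intros [A B]. split. apply sqrt_lt_R0; auto.
    rewrite <- (sqrt_pow2 rr) by lra. apply sqrt_lt_1_alt. lra.
Qed.

Lemma open_punct : forall rr, 0 < rr -> open (punct_disc rr).
Proof.
  intros rr HR.
  apply (open_ext (fun y => (True /\ 0 < fst y ^ 2 + snd y ^ 2) /\ 0 < rr ^ 2 - (fst y ^ 2 + snd y ^ 2))).
  { intros [y1 y2]. rewrite punct_iff by auto. simpl. split; [intros [[_ A] B]; split; lra | intros [A B]; repeat split; lra]. }
  assert (Hc : Ck 0 (fun _ => True) (fun y : C => fst y ^ 2 + snd y ^ 2)) by
    (apply Ck_plus; try apply Ck_pow2; auto using open_true, Ck_fst, Ck_snd).
  apply open_sub. apply open_sub. apply open_true.
  intros z _. apply (Ck_cont 0 (fun _ => True)); auto.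
  intros z _. apply (Ck_cont 0 (fun _ => True)); auto. apply Ck_minus; auto using open_true, Ck_const.
Qed.

Lemma Kp_eq : forall a b u v : R, ((u, v) : C) <> RtoC 0 -> (- (1 + (a, b) * (u, v)) / ((u, v) * (u, v)))%C = (RK a b (u, v), IK a b (u, v)).
Proof.
  intros a b u v Hw.
  assert (Hs : 0 < u ^ 2 + v ^ 2).
  { destruct (Req_dec u 0) as [->|Hu]. destruct (Req_dec v 0) as [->|Hv]. exfalso; apply Hw; reflexivity.
    pose proof (pow2_gt_0 v Hv). simpl; nra. pose proof (pow2_gt_0 u Hu). pose proof (pow2_ge_0 v). lra. }
  unfold RK, IK, Cdiv, Cinv, Cmult, Cplus, Copp, RtoC; simpl.
  assert ((u * u - v * v) * ((u * u - v * v) * 1) + (u * v + v * u) * ((u * v + v * u) * 1) = (u ^ 2 + v ^ 2) ^ 2) by (simpl; ring).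
  rewrite H. f_equal; field; lra.
Qed.

Lemma Kp_nz : forall mu w, Cmod mu * Cmod w < 1 -> w <> 0%C -> (- (1 + mu * w) / (w * w))%C <> 0%C.
Proof.
  intros mu w Hm Hw E.
  assert (H : (- (1 + mu * w))%C = ((- (1 + mu * w) / (w * w)) * (w * w))%C) by (field; auto).
  rewrite E in H. assert (H' : (mu * w)%C = (-1)%C).
  { assert (H2 : (- (1 + mu * w))%C = 0%C) by (rewrite H; ring).
    replace (mu * w)%C with (- (- (1 + mu * w)) - 1)%C by ring. rewrite H2. ring. }
  apply (f_equal Cmod) in H'. rewrite Cmod_mult in H'.
  assert (C1 : Cmod (-1)%C = 1). { rewrite <- Cmod_1. unfold Cmod; simpl; f_equal; ring. }
  rewrite C1 in H'. lra.
Qed.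

Lemma Cpow_nz : forall (y : C) n, y <> RtoC 0 -> Cpow y n <> RtoC 0.
Proof.
  intros y n Hy. apply Cmod_gt_0. rewrite Cmod_pow. apply pow_lt. apply Cmod_gt_0; auto.
Qed.

Lemma Dw_fst : forall a b w al be, Dw a b w al be = fst ((RK a b w, IK a b w) * (al, be))%C.
Proof. intros. unfold Dw. simpl. ring. Qed.

Lemma key_id : forall (mu : C) (q k : nat) (y d : C), y <> RtoC 0 -> (1 <= q * k)%nat ->
  ((- (1 + mu * Cpow y (q * k)) / (Cpow y (q * k) * Cpow y (q * k))) * Dpow (q * k) y d)%C =
  (- RtoC (INR k) * ((mu * INR q / y + INR q / Cpow y (q * k + 1)) * d))%C.
Proof.
  intros mu q k y d Hy HN.
  assert (HI : INR (q * k) = INR q * INR k) by apply mult_INR.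
  unfold Dpow. rewrite HI. rewrite RtoC_mult.
  destruct (q * k)%nat as [|M] eqn:E; [lia|].
  replace (S M + 1)%nat with (S (S M)) by lia. simpl pred. simpl Cpow.
  pose proof (Cpow_nz y M Hy).
  field. split; auto.
Qed.

Lemma is_derive_id' : forall x, is_derive (fun s : R => s) x 1.
Proof. intros. apply is_derive_Reals, derivable_pt_lim_id. Qed.
Lemma is_derive_cst' : forall (c : R) x, is_derive (fun _ : R => c) x 0.
Proof. intros. apply is_derive_Reals, derivable_pt_lim_const. Qed.

Theorem lemma4p7 (p q k : nat) (mu : C) :
  (0 < p)%nat -> (0 < q)%nat -> Nat.gcd p q = 1%nat -> (1 <= k)%nat ->
  exists r0 : R, 0 < r0 /\
    forall r : R, 0 < r <= r0 ->
      exists (f g : C -> R),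
        submersion_on (punct_disc r) f /\
        first_integral (punct_disc r) (omega1 q k mu) f /\
        submersion_on (punct_disc (r ^ (q * k))) g /\
        (forall y, punct_disc r y -> f y = g (Cpow y (q * k))).
Proof.
  intros Hp Hq Hg Hk.
  set (a := fst mu). set (b := snd mu).
  assert (HN : (1 <= q * k)%nat) by nia.
  pose proof (Tb_pos a b (1/2) ltac:(lra) ltac:(lra)) as HT.
  set (rho0 := Rmin (1/2) (Rmin (/ (4 * Tb a b)) (/ (Cmod mu + 1)))).
  assert (Hmu : 0 <= Cmod mu) by apply Cmod_ge_0.
  assert (Hr1 : rho0 <= 1/2) by apply Rmin_l.
  assert (Hr2 : rho0 <= / (4 * Tb a b)) by (eapply Rle_trans; [apply Rmin_r|apply Rmin_l]).
  assert (Hr3 : rho0 <= / (Cmod mu + 1)) by (eapply Rle_trans; [apply Rmin_r|apply Rmin_r]).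
  assert (Hr0 : 0 < rho0).
  { unfold rho0. apply Rmin_pos. lra. apply Rmin_pos; apply Rinv_0_lt_compat; lra. }
  assert (Kmod : forall w, Cmod w < rho0 -> Cmod mu * Cmod w < 1).
  { intros w Hw. pose proof (Cmod_ge_0 w).
    apply (Rle_lt_trans _ (Cmod mu * / (Cmod mu + 1))).
    apply Rmult_le_compat_l; lra.
    apply (Rmult_lt_reg_r (Cmod mu + 1)); [lra|]. rewrite Rmult_assoc, Rinv_l by lra. lra. }
  assert (Hmu2 : mu = (a, b)) by (unfold a, b; apply surjective_pairing).
  assert (Knz : forall w : C, 0 < Cmod w < rho0 -> (RK a b w, IK a b w) <> RtoC 0).
  { intros w [Hw1 Hw2]. rewrite (surjective_pairing w). rewrite <- Kp_eq.
    rewrite <- Hmu2. rewrite <- surjective_pairing. apply Kp_nz. apply Kmod; auto.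
    apply Cmod_gt_0; auto. rewrite <- surjective_pairing. apply Cmod_gt_0; auto. }
  exists rho0. split; [exact Hr0|].
  intros r [Hr Hrr].
  set (N := (q * k)%nat) in *.
  assert (HrN : r ^ N <= r). { destruct N as [|M]; [lia|]. apply pow_le_self. lra. }
  assert (HRp : 0 < r ^ N) by (apply pow_lt; lra).
  assert (Hsq : forall x, 0 < Cmod x < rho0 -> 0 < fst x ^ 2 + snd x ^ 2 < rho0 ^ 2).
  { intros x Hx. apply punct_iff; auto. }
  assert (Hw : forall y, punct_disc r y -> 0 < Cmod (Cpow y N) < rho0).
  { intros y [Hy1 Hy2]. rewrite Cmod_pow. destruct N as [|M]; [lia|]. split. apply pow_lt; auto.
    pose proof (pow_lt_S (Cmod y) r M ltac:(lra) Hy2). lra. }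
  exists (fun y => gg a b (Cpow y N)), (gg a b).
  split; [|split; [|split]].
  -
    split.
    + intros n. apply (Ck_ext_glob _ _ _ (fun y => gg a b (fst (Cpow y N), snd (Cpow y N)))).
      { intros y; rewrite <- surjective_pairing; reflexivity. }
      destruct (Ck_Cpow N n (punct_disc r) (open_punct r Hr)) as [C1 C2].
      apply (Ck_gg a b rho0 Hr0 Hr1 Hr2); auto using open_punct.
    + intros y Hy.
      assert (Hy0 : y <> RtoC 0) by (apply Cmod_gt_0; apply Hy).
      destruct (Cpow_deriv N (fun s => s) (fun _ => snd y) (fst y) 1 0 (is_derive_id' _) (is_derive_cst' _ _)) as [A1 B1].
      destruct (Cpow_deriv N (fun _ => fst y) (fun s => s) (snd y) 0 1 (is_derive_cst' _ _) (is_derive_id' _)) as [A2 B2].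
      rewrite <- surjective_pairing in A1, B1, A2, B2.
      assert (Cw : 0 < fst (Cpow y N) ^ 2 + snd (Cpow y N) ^ 2 < rho0 ^ 2) by (apply Hsq, Hw, Hy).
      pose proof (along a b rho0 Hr0 Hr1 Hr2 _ _ _ _ _ A1 B1) as D1.
      pose proof (along a b rho0 Hr0 Hr1 Hr2 _ _ _ _ _ A2 B2) as D2.
      cbv beta in D1, D2. rewrite <- !surjective_pairing in D1, D2.
      specialize (D1 Cw). specialize (D2 Cw).
      unfold d1, d2.
      rewrite (Derive_ext (fun t => gg a b (Cpow (t, snd y) N)) (fun s => gg a b (fst (Cpow (s, snd y) N), snd (Cpow (s, snd y) N)))) by (intros; rewrite <- surjective_pairing; reflexivity).
      rewrite (Derive_ext (fun t => gg a b (Cpow (fst y, t) N)) (fun s => gg a b (fst (Cpow (fst y, s) N), snd (Cpow (fst y, s) N)))) by (intros; rewrite <- surjective_pairing; reflexivity).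
      rewrite (is_derive_unique (fun s : R => gg a b (fst (Cpow (s, snd y) N), snd (Cpow (s, snd y) N))) _ _ D1), (is_derive_unique (fun s : R => gg a b (fst (Cpow (fst y, s) N), snd (Cpow (fst y, s) N))) _ _ D2).
      set (w := Cpow y N) in *.
      set (X := (RtoC (INR N) * Cpow y (pred N))%C).
      unfold Dpow. fold X. rewrite !Dw_fst, <- !surjective_pairing.
      set (K := (RK a b w, IK a b w)).
      assert (KX : (K * X)%C <> RtoC 0).
      { apply Cmod_gt_0. rewrite Cmod_mult. apply Rmult_lt_0_compat; apply Cmod_gt_0.
        apply Knz. apply Hw, Hy. unfold X. intro E. apply (f_equal Cmod) in E. rewrite Cmod_mult in E.
        rewrite Cmod_0 in E. apply Rmult_integral in E. destruct E as [E|E].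
        - rewrite Cmod_R in E. rewrite Rabs_pos_eq in E by apply pos_INR. apply (not_0_INR N). lia. exact E.
        - apply (Cpow_nz y (pred N) Hy0). apply Cmod_eq_0. exact E. }
      intro E. injection E as E1 E2.
      pose proof (lam_pos a b w).
      apply Rmult_integral in E1. apply Rmult_integral in E2.
      destruct E1 as [E1|E1]; [lra|]. destruct E2 as [E2|E2]; [lra|].
      apply KX. rewrite (surjective_pairing K), (surjective_pairing X) in *. unfold Cmult in *; simpl in *. unfold RtoC. f_equal; lra.
  -
    intros a0 b0 g1 g2 Hab Hpath.
    set (phi := fun t => gg a b (Cpow (g1 t, g2 t) N)).
    assert (Dphi : forall t, a0 <= t <= b0 -> is_derive phi t 0).
    { intros t Ht. destruct (Hpath t Ht) as [HU [Hd1 [Hd2 Hom]]].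
      destruct (Cpow_deriv N g1 g2 t (Derive g1 t) (Derive g2 t) (Derive_correct _ _ Hd1) (Derive_correct _ _ Hd2)) as [A B].
      pose proof (along a b rho0 Hr0 Hr1 Hr2 _ _ _ _ _ A B) as D.
      cbv beta in D. rewrite <- !surjective_pairing in D.
      specialize (D (Hsq _ (Hw _ HU))).
      apply (is_derive_ext (fun s => gg a b (fst (Cpow (g1 s, g2 s) N), snd (Cpow (g1 s, g2 s) N)))).
      { intros s. unfold phi. rewrite <- surjective_pairing. reflexivity. }
      replace 0 with (lam a b (Cpow (g1 t, g2 t) N) * Dw a b (Cpow (g1 t, g2 t) N) (fst (Dpow N (g1 t, g2 t) (Derive g1 t, Derive g2 t))) (snd (Dpow N (g1 t, g2 t) (Derive g1 t, Derive g2 t)))).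
      exact D.
      rewrite Dw_fst, <- surjective_pairing.
      set (yt := (g1 t, g2 t)) in *.
      assert (Hy0 : yt <> RtoC 0) by (apply Cmod_gt_0; apply HU).
      pose proof (Knz (Cpow yt N) (Hw _ HU)) as _.
      rewrite (surjective_pairing (Cpow yt N)) at 1 2.
      rewrite <- Kp_eq.
      2:{ rewrite <- surjective_pairing. apply Cpow_nz; auto. }
      rewrite <- surjective_pairing. rewrite <- Hmu2.
      unfold N. rewrite key_id by auto.
      unfold omega1, Re in Hom. fold yt in Hom.
      set (Z := ((mu * INR q / yt + INR q / Cpow yt (q * k + 1)) * (Derive g1 t, Derive g2 t))%C) in *.
      replace (fst (- RtoC (INR k) * Z)%C) with (- INR k * fst Z) by (rewrite (surjective_pairing Z); unfold Copp, Cmult, RtoC; simpl; ring).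
      rewrite Hom. ring. }
    destruct (Req_dec a0 b0) as [E|E]; [rewrite E; reflexivity|].
    destruct (MVT_gen phi a0 b0 (fun _ => 0)) as [c [Hc Hc']].
    + intros x Hx. rewrite Rmin_left, Rmax_right in Hx by lra. apply Dphi; lra.
    + intros x Hx. rewrite Rmin_left, Rmax_right in Hx by lra. apply continuity_pt_filterlim.
      apply exd_cont. eexists. apply Dphi; lra.
    + unfold phi in Hc'. simpl in Hc'. lra.
  -
    assert (HR : forall y, punct_disc (r ^ N) y -> 0 < Cmod y < rho0) by (intros y [A B]; split; lra).
    split.
    + intros n. apply (Ck_ext_glob _ _ _ (fun y => gg a b (fst y, snd y))).
      { intros y; rewrite <- surjective_pairing; reflexivity. }
      apply (Ck_gg a b rho0 Hr0 Hr1 Hr2); auto using open_punct, Ck_fst, Ck_snd.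
    + intros y Hy. pose proof (HR y Hy) as Hy'.
      pose proof (along a b rho0 Hr0 Hr1 Hr2 (fun s => s) (fun _ => snd y) (fst y) 1 0 (is_derive_id' _) (is_derive_cst' _ _)) as D1.
      pose proof (along a b rho0 Hr0 Hr1 Hr2 (fun _ => fst y) (fun s => s) (snd y) 0 1 (is_derive_cst' _ _) (is_derive_id' _)) as D2.
      cbv beta in D1, D2. rewrite <- !surjective_pairing in D1, D2.
      specialize (D1 (Hsq _ Hy')). specialize (D2 (Hsq _ Hy')).
      unfold d1, d2.
      rewrite (is_derive_unique (fun s : R => gg a b (s, snd y)) _ _ D1), (is_derive_unique (fun s : R => gg a b (fst y, s)) _ _ D2).
      pose proof (Knz y Hy') as KN. pose proof (lam_pos a b y).
      intro E. injection E as E1 E2. unfold Dw in E1, E2.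
      apply Rmult_integral in E1. apply Rmult_integral in E2.
      destruct E1 as [E1|E1]; [lra|]. destruct E2 as [E2|E2]; [lra|].
      apply KN. unfold RtoC. f_equal; lra.
  - intros y _. reflexivity.
Qed.
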